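(* In the setting of the context, if $\pi_\alpha\to0$ as $n\to\infty$, then $\widehat\pi_{uc}=n^{-1}\sum_{i=1}^n\delta_i\xrightarrow{\mathbb{P}}\pi_{uc}$.
   Context: For each $n$ we observe $(Y_i,X_i,\delta_i)$, $i=1,\dots,n$, with $T_i=X_i^\top\beta+\alpha_i+\xi_i$, $Y_i=\min(T_i,C_i)$, $\delta_i=\mathbb{1}\{T_i\le C_i\}$; $\{C_i,X_i,\xi_i\}_i$ are independent and identically distributed, with the distribution of $(X_i,\xi_i)$ (and of $C_i$) not depending on $n$, while the distribution of $\alpha_i$ may depend on $n$. $\pi_\alpha=\mathbb{P}(\alpha_i\neq0)$. With $\tilde T_i=T_i-\alpha_i$ and $\tilde\delta_i=\mathbb{1}\{\tilde T_i\le C_i\}$, $\pi_{uc}=\mathbb{P}(\tilde\delta_1=1)$. *)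

(* Defs.v *)
From HB Require Import structures.
From mathcomp Require Import all_boot all_order all_algebra.
From mathcomp Require Import all_classical all_reals all_analysis.
Set Implicit Arguments. Unset Strict Implicit. Unset Printing Implicit Defensive.
Import Order.TTheory GRing.Theory Num.Theory.
Local Open Scope classical_set_scope.
Local Open Scope ring_scope.

(* Independence: product rule for every finite (duplicate-free) set of indices
   and every choice of Borel rectangles; rectangles form a pi-system generating
   the product sigma-algebra, so this is the usual notion. *)
Definition rect_event {d} {Omega : measurableType d} {R : realType} {J : finType}
  (Z : J -> Omega -> R) (A : J -> set R) : set Omega :=
  \bigcap_(j in [set: J]) (Z j @^-1` A j).

Definition iid_vectors {d} {Omega : measurableType d} {R : realType}
  (P : probability Omega R) (J : finType) (Z : nat -> J -> Omega -> R) : Prop :=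
  (forall i j, measurable_fun setT (Z i j)) /\
  (forall (s : seq nat) (A : nat -> J -> set R),
      uniq s -> (forall i j, measurable (A i j)) ->
      P (\bigcap_(i in [set` s]) rect_event (Z i) (A i))
      = (\prod_(i <- s) P (rect_event (Z i) (A i)))%E) /\
  (forall i (A : J -> set R), (forall j, measurable (A j)) ->
      P (rect_event (Z i) A) = P (rect_event (Z 0%N) A)).

Definition CXxi {T R : Type} {p : nat} (C xi : nat -> T -> R)
  (X : nat -> 'I_p -> T -> R) (i : nat) (j : option (option 'I_p)) : T -> R :=
  match j with
  | None => C i
  | Some None => xi i
  | Some (Some k) => X i k
  end.

Definition lin {T} {R : realType} {p : nat} (X : nat -> 'I_p -> T -> R)
  (beta : 'I_p -> R) (i : nat) (w : T) : R := \sum_(k < p) X i k w * beta k.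

Definition delta {T} {R : realType} {p : nat} (C xi : nat -> T -> R)
  (X : nat -> 'I_p -> T -> R) (alpha : nat -> nat -> T -> R) (beta : 'I_p -> R)
  (n i : nat) (w : T) : R :=
  (if lin X beta i w + alpha n i w + xi i w <= C i w then 1 else 0).

(* hat pi_uc = n^{-1} sum_{i=1}^n delta_i (indices shifted to 0..n-1) *)
Definition pi_uc_hat {T} {R : realType} {p : nat} (C xi : nat -> T -> R)
  (X : nat -> 'I_p -> T -> R) (alpha : nat -> nat -> T -> R) (beta : 'I_p -> R)
  (n : nat) (w : T) : R :=
  n%:R^-1 * \sum_(i < n) delta C xi X alpha beta n i w.

(* pi_uc = P(tilde delta_1 = 1) = P(X_1^T beta + xi_1 <= C_1) *)
Definition pi_uc {d} {Omega : measurableType d} {R : realType}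
  (P : probability Omega R) {p : nat} (C xi : nat -> Omega -> R)
  (X : nat -> 'I_p -> Omega -> R) (beta : 'I_p -> R) : R :=
  fine (P [set w | lin X beta 0%N w + xi 0%N w <= C 0%N w]).

Definition pi_alpha {d} {Omega : measurableType d} {R : realType}
  (P : probability Omega R) (alpha : nat -> nat -> Omega -> R) (n : nat) : \bar R :=
  P [set w | alpha n 0%N w != 0].

(* Main.v *)
Require Import Defs.
From HB Require Import structures.
From mathcomp Require Import all_boot all_order all_algebra.
From mathcomp Require Import all_classical all_reals all_analysis.
From mathcomp Require Import ring lra measurable_realfun.
Import Order.TTheory GRing.Theory Num.Theory numFieldNormedType.Exports.
Local Open Scope classical_set_scope.
Local Open Scope ring_scope.


Definition fvec (R : realType) (J : finType) := J -> R.
HB.instance Definition _ (R : realType) (J : finType) := gen_eqMixin (fvec R J).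
HB.instance Definition _ (R : realType) (J : finType) := gen_choiceMixin (fvec R J).
HB.instance Definition _ (R : realType) (J : finType) :=
  isPointed.Build (fvec R J) (fun=> 0%R).

Section Dist.
Context {R : realType} {J : finType}.

Definition Grect : set (set (fvec R J)) :=
  [set S | exists A : J -> set R, (forall j, measurable (A j)) /\
     S = [set v | forall j, A j (v j)]].

Notation Msp := (g_sigma_algebraType Grect).

Lemma Msp_measurableE : @measurable _ Msp = <<s Grect >>.
Proof. by []. Qed.

Lemma coord_meas (j : J) : measurable_fun setT (fun v : Msp => v j).
Proof.
move=> _ B mB; rewrite setTI; apply: sub_sigma_algebra.
exists (fun k => if k == j then B else setT); split.
  by move=> k; case: eqP.
apply/seteqP; split => v /=.
  by move=> Bv k; case: eqP => // ->.
by move=> /(_ j); rewrite eqxx.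
Qed.

Lemma setI_Grect : setI_closed Grect.
Proof.
move=> _ _ [A [mA ->]] [B [mB ->]]; exists (fun j => A j `&` B j); split.
  by move=> j; exact: measurableI.
apply/seteqP; split => v /=.
  by move=> [h1 h2] j; split.
by move=> h; split => j; case: (h j).
Qed.

Lemma Grect_setT : Grect setT.
Proof.
exists (fun=> setT); split => //; apply/seteqP; split => v //.
Qed.

Lemma uniq_Msp (m1 m2 : {measure set Msp -> \bar R}) :
  (forall A, (forall j, measurable (A j)) ->
     m1 [set v | forall j, A j (v j)] = m2 [set v | forall j, A j (v j)]) ->
  (m1 setT < +oo)%E -> forall S, measurable S -> m1 S = m2 S.
Proof.
move=> h1 h2 S mS.
apply: (@measure_unique _ _ Msp Grect (fun=> setT) Msp_measurableE
  setI_Grect (fun=> Grect_setT) _ m1 m2 _ (fun=> h2) S mS).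
- by rewrite bigcup_const.
- by move=> _ [A [mA ->]]; exact: h1.
Qed.

Context d (Omega : measurableType d).

Definition vec (Z : J -> Omega -> R) : Omega -> Msp := fun w j => Z j w.

Lemma vec_rect (Z : J -> Omega -> R) A :
  vec Z @^-1` [set v | forall j, A j (v j)] = rect_event Z A.
Proof.
apply/seteqP; split => w /=.
  by move=> h j _; exact: h.
by move=> h j; exact: h j I.
Qed.

Lemma rect_meas (Z : J -> Omega -> R) A :
  (forall j, measurable_fun setT (Z j)) -> (forall j, measurable (A j)) ->
  measurable (rect_event Z A).
Proof.
move=> mZ mA; apply: fin_bigcap_measurable => //.
by move=> j _; rewrite -[X in measurable X]setTI; exact: mZ.
Qed.

Lemma vec_meas (Z : J -> Omega -> R) :
  (forall j, measurable_fun setT (Z j)) -> measurable_fun setT (vec Z).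
Proof.
move=> mZ; apply: (@measurability _ _ Omega Msp setT (vec Z) Grect Msp_measurableE).
move=> _ [_ [A [mA ->]] <-].
by rewrite setTI vec_rect; exact: rect_meas.
Qed.


Definition muV (P : probability Omega R) {Z : J -> Omega -> R}
  (mZ : forall j, measurable_fun setT (Z j)) {B : set Omega} (mB : measurable B)
  : set Msp -> \bar R := fun S => mrestr P mB (vec Z @^-1` S).

Section muV_measure.
Variables (P : probability Omega R) (Z : J -> Omega -> R)
  (mZ : forall j, measurable_fun setT (Z j)) (B : set Omega) (mB : measurable B).

Let mV : forall S : set Msp, measurable S -> measurable (vec Z @^-1` S).
Proof. by move=> S mS; rewrite -[X in measurable X]setTI; exact: vec_meas. Qed.

Let muV0 : muV P mZ mB set0 = 0%E.
Proof. by rewrite /muV preimage_set0 measure0. Qed.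

Let muV_ge0 S : (0 <= muV P mZ mB S)%E.
Proof. exact: measure_ge0. Qed.

Let muV_sigma_additive : semi_sigma_additive (muV P mZ mB).
Proof.
move=> F mF tF mUF; rewrite /muV preimage_bigcup.
apply: (@measure_semi_sigma_additive _ _ _ (mrestr P mB)).
- by move=> n; exact: mV.
- apply/trivIsetP => /= i j _ _ ij; rewrite -preimage_setI.
  by move/trivIsetP : tF => /(_ _ _ _ _ ij) ->//; rewrite preimage_set0.
- by rewrite -preimage_bigcup; exact: mV.
Qed.

HB.instance Definition _ := isMeasure.Build _ _ _
  (muV P mZ mB) muV0 muV_ge0 muV_sigma_additive.

End muV_measure.


Section Indep.
Variables (P : probability Omega R) (Z : nat -> J -> Omega -> R).
Hypothesis hZ : iid_vectors P Z.

Lemma iid_meas i : forall j, measurable_fun setT (Z i j).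
Proof. by case: hZ => h _. Qed.

Lemma Pfin (A : set Omega) : measurable A -> (fine (P A))%:E = P A.
Proof. by move=> mA; rewrite fineK // fin_num_measure. Qed.

Lemma Plty (A : set Omega) : measurable A -> (P A < +oo)%E.
Proof. by move=> mA; rewrite ltey_eq fin_num_measure. Qed.

Lemma rect_indep i k : i != k -> forall A1 A2,
  (forall j, measurable (A1 j)) -> (forall j, measurable (A2 j)) ->
  P (rect_event (Z i) A1 `&` rect_event (Z k) A2) =
  (P (rect_event (Z i) A1) * P (rect_event (Z k) A2))%E.
Proof.
move=> ik A1 A2 mA1 mA2; case: hZ => _ [hI _].
pose A := fun i0 => if i0 == i then A1 else A2.
have Ai : A i = A1 by rewrite /A eqxx.
have Ak : A k = A2 by rewrite /A eq_sym (negbTE ik).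
have := hI [:: i; k] A; rewrite /= inE ik big_cons big_cons big_nil mule1 Ai Ak.
move=> <- //; last first.
  by move=> i0 j; rewrite /A; case: (i0 == i).
congr (P _); apply/seteqP; split => w /=.
  move=> [h1 h2] i0; rewrite /= !inE => /orP[] /eqP ->; by rewrite ?Ai ?Ak.
move=> h; split.
  by have := h i; rewrite /= !inE eqxx Ai => /(_ isT).
by have := h k; rewrite /= !inE eqxx orbT Ak => /(_ isT).
Qed.

Lemma vec_indep i k : i != k -> forall S1 S2 : set Msp,
  measurable S1 -> measurable S2 ->
  P (vec (Z i) @^-1` S1 `&` vec (Z k) @^-1` S2) =
  (P (vec (Z i) @^-1` S1) * P (vec (Z k) @^-1` S2))%E.
Proof.
move=> ik.
have mV l (S : set Msp) : measurable S -> measurable (vec (Z l) @^-1` S).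
  by move=> mS; rewrite -[X in measurable X]setTI; exact: (@vec_meas (Z l) (iid_meas l) measurableT S mS).
have step1 : forall A2, (forall j, measurable (A2 j)) -> forall S1 : set Msp,
    measurable S1 ->
    P (vec (Z i) @^-1` S1 `&` vec (Z k) @^-1` [set v | forall j, A2 j (v j)]) =
    (P (vec (Z i) @^-1` S1) * P (vec (Z k) @^-1` [set v | forall j, A2 j (v j)]))%E.
  move=> A2 mA2.
  set B := vec (Z k) @^-1` _.
  have mB : measurable B by rewrite /B vec_rect; exact: (@rect_meas (Z k) A2 (iid_meas k) mA2).
  pose r := NngNum (fine_ge0 (measure_ge0 P B)).
  pose m1 := muV P (iid_meas i) mB.
  pose m2 := mscale r (muV P (iid_meas i) measurableT).
  move=> S1 mS1.
  have e := @uniq_Msp m1 m2.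
  rewrite /m1 /m2 /= /mscale /muV /mrestr /= in e.
  rewrite e //; rewrite /muV /mrestr /=.
  - by rewrite setIT muleC Pfin.
  - move=> A1 mA1; rewrite setIT /B !vec_rect rect_indep // muleC Pfin //.
    exact: (@rect_meas (Z k) A2 (iid_meas k) mA2).
  - by apply: Plty; apply: measurableI => //; exact: mV.
move=> S1 S2 mS1 mS2.
set B := vec (Z i) @^-1` S1.
have mB : measurable B by exact: mV.
pose r := NngNum (fine_ge0 (measure_ge0 P B)).
pose m1 := muV P (iid_meas k) mB.
pose m2 := mscale r (muV P (iid_meas k) measurableT).
have e := @uniq_Msp m1 m2.
rewrite /m1 /m2 /= /mscale /muV /mrestr /= in e.
rewrite setIC e //; rewrite /muV /mrestr /=.
- by rewrite setIT Pfin.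
- by move=> A2 mA2; rewrite setIT setIC step1 // Pfin.
- by apply: Plty; apply: measurableI => //; exact: mV.
Qed.

Lemma vec_ident i (S : set Msp) : measurable S ->
  P (vec (Z i) @^-1` S) = P (vec (Z 0%N) @^-1` S).
Proof.
move=> mS; case: hZ => _ [_ hD].
pose m1 := muV P (iid_meas i) measurableT.
pose m2 := muV P (iid_meas 0%N) measurableT.
have e := @uniq_Msp m1 m2.
rewrite /m1 /m2 /= /muV /mrestr /= in e.
rewrite -(setIT (_ @^-1` S)) e //; rewrite /muV /mrestr /= ?setIT//.
- by move=> A mA; rewrite !setIT !vec_rect hD.
- by apply: Plty; rewrite preimage_setT.
Qed.

End Indep.

End Dist.

Arguments iid_meas {R J d Omega P Z}.
Arguments vec_indep {R J d Omega P Z}.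
Arguments vec_ident {R J d Omega P Z}.
Arguments vec_meas {R J d Omega Z}.
Arguments Pfin {R d Omega P}.



Section Bnd.
Context d (Omega : measurableType d) (R : realType) (P : probability Omega R).

Definition bnd (f : Omega -> R) :=
  measurable_fun setT f /\ exists M : R, forall x, `|f x| <= M.

Lemma bnd_cst c : bnd (fun=> c).
Proof. by split; [exact: measurable_cst | exists `|c|]. Qed.

Lemma bnd_indic A : measurable A -> bnd (\1_A).
Proof.
move=> mA; split; first exact: measurable_indic.
exists 1 => x; rewrite indicE; case: (x \in A) => /=; rewrite ?normr1 ?normr0 //.
Qed.

Lemma bnd_add f g : bnd f -> bnd g -> bnd (fun x => f x + g x).
Proof.
move=> [mf [M hM]] [mg [N hN]]; split; first exact: measurable_funD.
by exists (M + N) => x; rewrite (le_trans (ler_normD _ _)) // lerD.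
Qed.

Lemma bnd_mul f g : bnd f -> bnd g -> bnd (fun x => f x * g x).
Proof.
move=> [mf [M hM]] [mg [N hN]]; split; first exact: measurable_funM.
exists (M * N) => x; rewrite normrM ler_pM //.
Qed.

Lemma bnd_opp f : bnd f -> bnd (fun x => - f x).
Proof.
move=> [mf [M hM]]; split; first exact: measurable_funN.
by exists M => x; rewrite normrN.
Qed.

Lemma bnd_norm f : bnd f -> bnd (fun x => `|f x|).
Proof.
move=> [mf [M hM]]; split; first by apply: measurableT_comp => //; exact: normr_measurable.
by exists M => x; rewrite normr_id.
Qed.

Lemma bnd_sum (I : Type) (s : seq I) (F : I -> Omega -> R) :
  (forall i, bnd (F i)) -> bnd (fun x => \sum_(i <- s) F i x).
Proof.
move=> hF; elim: s => [|i s IH].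
  by under eq_fun do rewrite big_nil; exact: bnd_cst.
by under eq_fun do rewrite big_cons; exact: bnd_add.
Qed.

Lemma bnd_int f : bnd f -> P.-integrable setT (EFin \o f).
Proof.
move=> [mf [M hM]]; apply: measurable_bounded_integrable => //.
  by rewrite (le_lt_trans (probability_le1 P measurableT)) // ltry.
exists M; split; first exact: num_real.
by move=> N hN x _ /=; exact: le_trans (hM x) (ltW hN).
Qed.

Lemma bnd_le f g : bnd f -> bnd g -> measurable [set x | f x <= g x].
Proof.
move=> [mf _] [mg _]; rewrite -[X in measurable X]setTI.
exact: measurable_fun_le.
Qed.

Lemma Rint_add f g : bnd f -> bnd g ->
  \int[P]_x (f x + g x) = \int[P]_x f x + \int[P]_x g x.
Proof. by move=> bf bg; rewrite RintegralD //; exact: bnd_int. Qed.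

Lemma Rint_sum (I : Type) (s : seq I) (F : I -> Omega -> R) :
  (forall i, bnd (F i)) ->
  \int[P]_x (\sum_(i <- s) F i x) = \sum_(i <- s) \int[P]_x F i x.
Proof.
move=> hF; elim: s => [|i s IH].
  under eq_Rintegral do rewrite big_nil.
  by rewrite big_nil Rintegral_cst // mul0r.
under eq_Rintegral do rewrite big_cons.
by rewrite Rint_add ?IH ?big_cons //; exact: bnd_sum.
Qed.

Lemma Rint_scale c f : bnd f -> \int[P]_x (c * f x) = c * \int[P]_x f x.
Proof. by move=> bf; rewrite RintegralZl //; exact: bnd_int. Qed.

Lemma Rint_cst c : \int[P]_x c = c.
Proof.
have h : fine (P setT) = 1 by rewrite probability_setT.
by rewrite Rintegral_cst // h mulr1.
Qed.

Lemma Rint_indic A : measurable A -> \int[P]_x \1_A x = fine (P A).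
Proof. by move=> mA; rewrite /Rintegral integral_indic // setIT. Qed.

Lemma Rint_le f g : bnd f -> bnd g -> (forall x, f x <= g x) ->
  \int[P]_x f x <= \int[P]_x g x.
Proof. by move=> bf bg fg; apply: le_Rintegral => //; exact: bnd_int. Qed.

Lemma markov_bnd f a : bnd f -> 0 < a ->
  a * fine (P [set x | a <= f x]) <= \int[P]_x (`|f x|).
Proof.
move=> bf a0.
have mA : measurable [set x | a <= f x] by apply: bnd_le => //; exact: bnd_cst.
rewrite -Rint_indic // -Rint_scale; last exact: bnd_indic.
apply: Rint_le; [apply: bnd_mul; [exact: bnd_cst|exact: bnd_indic]|exact: bnd_norm|].
move=> x; rewrite indicE; case: (boolP (x \in _)) => [/set_mem /= h|_].
  by rewrite mulr1 (le_trans h) // ler_norm.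
by rewrite mulr0.
Qed.


Arguments bnd_add {f g}.
Arguments bnd_mul {f g}.
Arguments bnd_opp {f}.
Arguments bnd_norm {f}.
Arguments bnd_indic {A}.
Arguments markov_bnd {f a}.

Lemma bnd_sqr f : bnd f -> bnd (fun x => f x ^+ 2).
Proof. by move=> bf; exact: (bnd_mul bf bf). Qed.
Arguments bnd_sqr {f}.

Section Cheb.
Variables (E : nat -> set Omega) (mE : forall i, measurable (E i)) (q : R).
Hypothesis hq : forall i, P (E i) = q%:E.
Hypothesis hind : forall i k, i != k -> P (E i `&` E k) = (P (E i) * P (E k))%E.

Lemma q_ge0 : 0 <= q.
Proof. by rewrite -lee_fin -(hq 0%N) measure_ge0. Qed.

Lemma q_le1 : q <= 1.
Proof. by rewrite -lee_fin -(hq 0%N) probability_le1. Qed.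

Lemma cross i k : \int[P]_x ((\1_(E i) x - q) * (\1_(E k) x - q)) =
  (i == k)%:R * (q - q ^+ 2).
Proof.
have e x : (\1_(E i) x - q) * (\1_(E k) x - q) =
  \1_(E i `&` E k) x + ((- q) * \1_(E i) x + ((- q) * \1_(E k) x + q ^+ 2)).
  by rewrite indicI /=; ring.
under eq_Rintegral do rewrite e.
have bi := bnd_indic (mE i); have bk := bnd_indic (mE k).
have bik := bnd_indic (measurableI _ _ (mE i) (mE k)).
rewrite Rint_add //; last first.
  apply: bnd_add; first by apply: bnd_mul => //; exact: bnd_cst.
  by apply: bnd_add; [apply: bnd_mul => //; exact: bnd_cst|exact: bnd_cst].
rewrite Rint_add //; last first.
  by apply: bnd_add; [apply: bnd_mul => //; exact: bnd_cst|exact: bnd_cst].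
  by apply: bnd_mul => //; exact: bnd_cst.
rewrite Rint_add //; [|by apply: bnd_mul => //; exact: bnd_cst|exact: bnd_cst].
rewrite Rint_cst (Rint_scale _ (\1_(E i))) // (Rint_scale _ (\1_(E k))) //.
rewrite !Rint_indic //; last exact: measurableI.
rewrite !hq /=.
case: eqP => [<-|/eqP ik].
  rewrite setIid hq /=; ring.
rewrite hind // !hq /=; ring.
Qed.

Lemma bY i : bnd (fun x => \1_(E i) x - q).
Proof. exact: bnd_add (bnd_indic (mE i)) (bnd_opp (bnd_cst q)). Qed.

Lemma second n : \int[P]_x ((\sum_(i < n) (\1_(E i) x - q)) ^+ 2) =
  n%:R * (q - q ^+ 2).
Proof.
under eq_Rintegral do rewrite expr2 mulr_suml.
under eq_Rintegral do under eq_bigr do rewrite mulr_sumr.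
rewrite Rint_sum; last by move=> i; apply: bnd_sum => k; apply: bnd_mul; exact: bY.
rewrite (eq_bigr (fun i : 'I_n => \sum_(k < n) ((i == k :> nat)%:R * (q - q ^+ 2)))); last first.
  move=> i _; rewrite Rint_sum; last by move=> k; apply: bnd_mul; exact: bY.
  by apply: eq_bigr => k _; rewrite cross.
rewrite (eq_bigr (fun=> q - q ^+ 2)); first by rewrite sumr_const card_ord mulr_natl.
move=> i _.
rewrite (bigD1 i) //= eqxx mul1r big1 ?addr0 // => k ki.
have -> : (val i == val k) = false by apply/negbTE; rewrite eq_sym; exact: ki.
by rewrite mul0r.
Qed.

Lemma cheb n eps : 0 < eps -> (0 < n)%N ->
  eps * fine (P [set x | eps <= (n%:R^-1 * \sum_(i < n) \1_(E i) x - q) ^+ 2])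
  <= n%:R^-1.
Proof.
move=> e0 n0.
have n0' : n%:R != 0 :> R by rewrite pnatr_eq0 -lt0n.
have fE x : (n%:R^-1 * \sum_(i < n) \1_(E i) x - q) ^+ 2 =
    n%:R^-2 * (\sum_(i < n) (\1_(E i) x - q)) ^+ 2.
  rewrite sumrB sumr_const card_ord -mulr_natr.
  by field.
have bf : bnd (fun x => (n%:R^-1 * \sum_(i < n) \1_(E i) x - q) ^+ 2).
  apply: bnd_sqr; apply: bnd_add; last exact: bnd_opp (bnd_cst q).
  apply: bnd_mul; first exact: bnd_cst.
  apply: bnd_sum => i; exact: bnd_indic.
apply: le_trans (markov_bnd bf e0) _.
under eq_Rintegral do rewrite ger0_norm ?sqr_ge0 // fE.
rewrite Rint_scale; last first.
  by apply: bnd_sqr; apply: bnd_sum => i; exact: bY.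
rewrite second.
have q0 := q_ge0; have q1 := q_le1.
have ni : 0 < n%:R^-1 :> R by rewrite invr_gt0 ltr0n.
rewrite (_ : n%:R^-2 * (n%:R * (q - q ^+ 2)) = n%:R^-1 * (q - q ^+ 2)); last by field.
rewrite -[leRHS]mulr1 ler_pM2l //; nra.
Qed.

End Cheb.

Lemma markovK (B : nat -> set Omega) (mB : forall i, measurable (B i)) n a :
  0 < a ->
  a * fine (P [set x | a <= n%:R^-1 * \sum_(i < n) \1_(B i) x])
  <= n%:R^-1 * \sum_(i < n) fine (P (B i)).
Proof.
move=> a0.
have bf : bnd (fun x => n%:R^-1 * \sum_(i < n) \1_(B i) x).
  apply: bnd_mul; first exact: bnd_cst.
  apply: bnd_sum => i; exact: bnd_indic.
apply: le_trans (markov_bnd bf a0) _.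
under eq_Rintegral do rewrite ger0_norm ?mulr_ge0 ?invr_ge0 ?ler0n ?sumr_ge0 //.
  rewrite Rint_scale; last by apply: bnd_sum => i; exact: bnd_indic.
  rewrite Rint_sum; last by move=> i; exact: bnd_indic.
  by under eq_bigr do rewrite Rint_indic //.
Qed.

End Bnd.

Arguments bnd {d Omega R}.
Arguments bnd_cst {d Omega R}.
Arguments bnd_indic {d Omega R A}.
Arguments bnd_add {d Omega R f g}.
Arguments bnd_mul {d Omega R f g}.
Arguments bnd_opp {d Omega R f}.
Arguments bnd_norm {d Omega R f}.
Arguments bnd_sum {d Omega R I s F}.
Arguments bnd_le {d Omega R f g}.
Arguments bnd_sqr {d Omega R f}.
Arguments cheb {d Omega R P E} mE {q}.
Arguments markovK {d Omega R P B} mB.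



Theorem lemma2 (R : realType) (d : measure_display) (Omega : measurableType d)
  (P : probability Omega R) (p : nat) (beta : 'I_p -> R)
  (C xi : nat -> Omega -> R) (X : nat -> 'I_p -> Omega -> R)
  (alpha : nat -> nat -> Omega -> R) :
  iid_vectors P (CXxi C xi X) ->
  (forall n i, measurable_fun setT (alpha n i)) ->
  (forall n i, P [set w | alpha n i w != 0] = pi_alpha P alpha n) ->
  pi_alpha P alpha n @[n --> \oo] --> 0%E ->
  forall eps : R, 0 < eps ->
    P [set w | eps <= `| pi_uc_hat C xi X alpha beta n w - pi_uc P C xi X beta |]
      @[n --> \oo] --> 0%E.
Proof.
move=> hZ malpha hpi hcvg eps e0.
pose J := option (option 'I_p).
pose Z := CXxi C xi X.
pose Sset : set (g_sigma_algebraType (@Grect R J)) :=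
  [set v | \sum_(k < p) v (Some (Some k)) * beta k + v (Some None) <= v None].
have mS : measurable Sset.
  rewrite -[X in measurable X]setTI; apply: measurable_fun_le => //.
    apply: measurable_funD; last exact: coord_meas.
    apply: measurable_sum => k; apply: measurable_funM; last exact: measurable_cst.
    exact: coord_meas.
  exact: coord_meas.
pose E i : set Omega := [set w | lin X beta i w + xi i w <= C i w].
have EE i : E i = vec d Omega (Z i) @^-1` Sset by [].
have mE i : measurable (E i).
  rewrite EE -[X in measurable X]setTI.
  exact: (vec_meas (iid_meas hZ i) measurableT _ mS).
set q := pi_uc P C xi X beta.
have hq i : P (E i) = q%:E.
  by rewrite /q /pi_uc -/(E 0%N) !EE (vec_ident hZ) // Pfin // -EE.
have hind i k : i != k -> P (E i `&` E k) = (P (E i) * P (E k))%E.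
  by move=> ik; rewrite !EE; exact: vec_indep.
pose B n i : set Omega := [set w | alpha n i w != 0].
have mB n i : measurable (B n i).
  have -> : B n i = alpha n i @^-1` (~` [set 0]).
    by apply/seteqP; split => w /= /eqP.
  rewrite -[X in measurable X]setTI; apply: (malpha n i) => //.
  exact: measurableC.
have mX i k : measurable_fun setT (X i k) := iid_meas hZ i (Some (Some k)).
have mxi i : measurable_fun setT (xi i) := iid_meas hZ i (Some None).
have mC i : measurable_fun setT (C i) := iid_meas hZ i None.
have mlin i : measurable_fun setT (lin X beta i).
  apply: measurable_sum => k; apply: measurable_funM; [exact: mX|exact: measurable_cst].
have bdelta n i : bnd (delta C xi X alpha beta n i).
  split.
    apply: measurable_fun_ifT; [|exact: measurable_cst|exact: measurable_cst].
    apply: measurable_fun_ler; last exact: mC.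
    apply: measurable_funD; last exact: mxi.
    by apply: measurable_funD; [exact: mlin|exact: malpha].
  exists 1 => w; rewrite /delta; case: ifP => _; rewrite ?normr1 ?normr0 //.
have bhat n : bnd (pi_uc_hat C xi X alpha beta n).
  apply: bnd_mul; first exact: bnd_cst.
  by apply: bnd_sum.
have key n w : `|pi_uc_hat C xi X alpha beta n w - q| <=
    `|n%:R^-1 * \sum_(i < n) \1_(E i) w - q| + n%:R^-1 * \sum_(i < n) \1_(B n i) w.
  have -> : pi_uc_hat C xi X alpha beta n w - q =
      (n%:R^-1 * \sum_(i < n) \1_(E i) w - q) +
      n%:R^-1 * \sum_(i < n) (delta C xi X alpha beta n i w - \1_(E i) w).
    by rewrite /pi_uc_hat sumrB; ring.
  rewrite (le_trans (ler_normD _ _)) // lerD2l normrM ger0_norm ?invr_ge0 ?ler0n //.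
  rewrite ler_wpM2l ?invr_ge0 ?ler0n // (le_trans (ler_norm_sum _ _ _)) //.
  apply: ler_sum => i _.
  have hE : (w \in E i) = (lin X beta i w + xi i w <= C i w).
    by apply/idP/idP => [/set_mem //|h]; exact: mem_set.
  rewrite /delta !indicE hE.
  have [ha|ha] := eqVneq (alpha n i w) 0.
    rewrite ha addr0.
    by case: (lin X beta i w + xi i w <= C i w); rewrite /= ?subrr ?subr0 normr0 ler0n.
  rewrite mem_set //=.
  case: (lin X beta i w + alpha n i w + xi i w <= C i w);
  by case: (lin X beta i w + xi i w <= C i w);
    rewrite /= ?subrr ?subr0 ?sub0r ?normrN ?normr0 ?normr1.
pose e2 := eps / 2.
have e20 : 0 < e2 by rewrite /e2 divr_gt0.
pose Ev n := [set w | eps <= `|pi_uc_hat C xi X alpha beta n w - q|].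
pose A1 n := [set w | e2 ^+ 2 <= (n%:R^-1 * \sum_(i < n) \1_(E i) w - q) ^+ 2].
pose A2 n := [set w | e2 <= n%:R^-1 * \sum_(i < n) \1_(B n i) w].
have bT n : bnd (fun w => n%:R^-1 * \sum_(i < n) \1_(E i) w).
  apply: bnd_mul; first exact: bnd_cst.
  by apply: bnd_sum => i; exact: bnd_indic.
have bK n : bnd (fun w => n%:R^-1 * \sum_(i < n) \1_(B n i) w).
  apply: bnd_mul; first exact: bnd_cst.
  by apply: bnd_sum => i; exact: bnd_indic.
have mEv n : measurable (Ev n).
  apply: bnd_le; first exact: bnd_cst.
  by apply: bnd_norm; apply: bnd_add => //; exact: bnd_cst.
have mA1 n : measurable (A1 n).
  apply: bnd_le; first exact: bnd_cst.
  by apply: bnd_sqr; apply: bnd_add => //; exact: bnd_cst.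
have mA2 n : measurable (A2 n).
  by apply: bnd_le => //; exact: bnd_cst.
have sub n : Ev n `<=` A1 n `|` A2 n.
  move=> w /= h; have := le_trans h (key n w).
  set a := `|_|; set b := _ * _ => hab.
  have [hb|hb] := leP e2 b; first by right.
  left; have ha : e2 <= a by move: hb; rewrite /e2 => hb; lra.
  rewrite /A1 /= -[X in _ <= X]real_normK ?num_real // !expr2.
  by apply: ler_pM => //; exact: ltW.
have bound n : (0 < n)%N ->
    fine (P (Ev n)) <= e2 ^- 2 * n%:R^-1 + e2^-1 * fine (pi_alpha P alpha n).
  move=> n0.
  have h1 : fine (P (Ev n)) <= fine (P (A1 n)) + fine (P (A2 n)).
    rewrite -lee_fin EFinD !Pfin //.
    apply: le_trans (measureU2 _ _ _) => //.
    by apply: le_measure => //; rewrite inE //; exact: measurableU.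
  have h2 := cheb mE hq hind n (e2 ^+ 2) (exprn_gt0 2 e20) n0.
  have h3 := markovK (P:=P) (mB n) n e2 e20.
  have hpa : \sum_(i < n) fine (P (B n i)) = n%:R * fine (pi_alpha P alpha n).
    under eq_bigr do rewrite /B hpi.
    by rewrite sumr_const card_ord mulr_natl.
  rewrite hpa mulrA mulVf ?mul1r ?pnatr_eq0 -?lt0n // in h3.
  apply: le_trans h1 _; apply: lerD.
    by rewrite -(ler_pM2l (exprn_gt0 2 e20)) mulrA mulfV ?mul1r // expf_neq0 // gt_eqF.
  by rewrite -(ler_pM2l e20) mulrA mulfV ?mul1r // gt_eqF.
pose h n := e2 ^- 2 * (2 * n.+1%:R^-1) + e2^-1 * fine (pi_alpha P alpha n).
have hh : h n @[n --> \oo] --> (0:R).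
  have H1 : (fun n : nat => n.+1%:R^-1 : R) @ \oo --> 0 := cvg_harmonic.
  have H2 : (fun n => fine (pi_alpha P alpha n)) @ \oo --> 0 := fine_cvg hcvg.
  rewrite (_ : 0 = e2 ^- 2 * (2 * 0) + e2^-1 * 0); last by rewrite !mulr0 addr0.
  have -> : h = (fun n => e2 ^- 2 * (2 * n.+1%:R^-1)) +
                (fun n => e2^-1 * fine (pi_alpha P alpha n)) by [].
  apply: cvgD; first exact: (cvgMl_tmp (cvgMl_tmp H1)).
  apply: cvgMl_tmp; apply: H2.
apply: cvg_EFin.
  by apply: nearW => n; apply: fin_num_measure; exact: mEv.
apply: (@squeeze_cvgr _ _ _ _ (fun=> 0) h); [|exact: cvg_cst|exact: hh].
apply: filterS (nbhs_infty_gt 0) => n /= n0.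
apply/andP; split; first exact: fine_ge0 (measure_ge0 _ _).
apply: le_trans (bound n n0) _; rewrite /h lerD2r ler_wpM2l //.
  by rewrite invr_ge0 exprn_ge0 // ltW.
have nR : 1 <= n%:R :> R by rewrite ler1n.
rewrite -subr_ge0.
have -> : 2 * n.+1%:R^-1 - n%:R^-1 = (n%:R - 1) / (n%:R * n.+1%:R) :> R.
  rewrite -natr1; field; apply/andP; split; rewrite gt_eqF //; lra.
by apply: divr_ge0; [lra|rewrite mulr_ge0 ?ler0n].
Qed.
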